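(* Let $(X,d)$ be a locally compact metric space and $f:X\to X$ a homeomorphism satisfying the topological shadowing property. Then for every $\epsilon\in\mathcal{C}^+$ there exists $\delta\in\mathcal{C}^+$ such that for every $\delta$-pseudo-orbit $\{x_n\}_{n\in\mathbb{Z}}$ there is $y\in X$ with $d(x_n,f^n(y))<\epsilon(f^n(y))$ for all $n\in\mathbb{Z}$.
   Context: $\mathcal{C}^+=\{\epsilon:X\to\mathbb{R}^+ : \epsilon \text{ continuous}\}$. For $\delta\in\mathcal{C}^+$, a sequence $\{x_n\}_{n\in\mathbb{Z}}\subset X$ is a $\delta$-pseudo-orbit of $f$ if $d(f(x_n),x_{n+1})<\delta(f(x_n))$ for every $n\in\mathbb{Z}$. For $\epsilon\in\mathcal{C}^+$, the sequence $\{x_n\}$ is $\epsilon$-shadowed by an orbit if there is $y\in X$ with $d(f^n(y),x_n)<\epsilon(x_n)$ for every $n\in\mathbb{Z}$. The homeomorphism $f$ satisfies the topological shadowing property if for every $\epsilon\in\mathcal{C}^+$ there exists $\delta\in\mathcal{C}^+$ such that every $\delta$-pseudo-orbit is $\epsilon$-shadowed by an orbit. *)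

(* Defs.v *)
From Stdlib Require Import Reals ZArith List.
Open Scope R_scope.

Record MetricSpace := {
  carrier :> Type;
  mdist : carrier -> carrier -> R;
  dist_nonneg : forall x y, 0 <= mdist x y;
  dist_eq0 : forall x y, mdist x y = 0 <-> x = y;
  dist_sym : forall x y, mdist x y = mdist y x;
  dist_tri : forall x y z, mdist x z <= mdist x y + mdist y z
}.

Section Metric.
Variable X : MetricSpace.

Definition mopen (U : X -> Prop) : Prop :=
  forall x, U x -> exists r, 0 < r /\ forall y, mdist X x y < r -> U y.

Definition mcompact (K : X -> Prop) : Prop :=
  forall (I : Type) (U : I -> X -> Prop),
    (forall i, mopen (U i)) ->
    (forall x, K x -> exists i, U i x) ->
    exists l : list I, forall x, K x -> exists i, In i l /\ U i x.

Definition locally_compact : Prop :=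
  forall x : X, exists r, 0 < r /\ mcompact (fun y => mdist X x y <= r).

Definition mcontinuous (Y : MetricSpace) (h : X -> Y) : Prop :=
  forall x eps, 0 < eps -> exists del, 0 < del /\
    forall y, mdist X x y < del -> mdist Y (h x) (h y) < eps.

Definition Cplus (e : X -> R) : Prop :=
  (forall x, 0 < e x) /\
  forall x eps, 0 < eps -> exists del, 0 < del /\
    forall y, mdist X x y < del -> Rabs (e x - e y) < eps.

Definition homeomorphism (f g : X -> X) : Prop :=
  mcontinuous X f /\ mcontinuous X g /\
  (forall x, g (f x) = x) /\ (forall x, f (g x) = x).

Definition iterz (f g : X -> X) (n : Z) (x : X) : X :=
  match n with
  | Z0 => x
  | Zpos p => Nat.iter (Pos.to_nat p) f x
  | Zneg p => Nat.iter (Pos.to_nat p) g x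
  end.

Definition pseudo_orbit (f : X -> X) (delta : X -> R) (xs : Z -> X) : Prop :=
  forall n : Z, mdist X (f (xs n)) (xs (n + 1)%Z) < delta (f (xs n)).

Definition shadowed (f g : X -> X) (eps : X -> R) (xs : Z -> X) : Prop :=
  exists y : X, forall n : Z, mdist X (iterz f g n y) (xs n) < eps (xs n).

Definition topological_shadowing (f g : X -> X) : Prop :=
  forall eps, Cplus eps -> exists delta, Cplus delta /\
    forall xs, pseudo_orbit f delta xs -> shadowed f g eps xs.

End Metric.

(* Main.v *)
Require Import Defs.
From Stdlib Require Import Reals ZArith Lra.
Open Scope R_scope.

Section H.
Variable X : MetricSpace.
Variable eps : X -> R.

Definition Eset (x : X) (v : R) : Prop := exists z, v = - (eps z + mdist X x z).

Hypothesis epos : forall x, 0 < eps x.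

Lemma Eset_bound x : bound (Eset x).
Proof.
  exists 0. intros v [z ->]. pose proof (epos z). pose proof (dist_nonneg X x z). lra.
Qed.

Lemma Eset_ne x : exists v, Eset x v.
Proof. exists (- (eps x + mdist X x x)). exists x. reflexivity. Qed.

Definition mval (x : X) : R := proj1_sig (completeness (Eset x) (Eset_bound x) (Eset_ne x)).

Lemma mval_lub x : is_lub (Eset x) (mval x).
Proof. unfold mval. destruct completeness; simpl; auto. Qed.

Definition hh (x : X) : R := - mval x / 2.

Lemma hh_le x z : hh x <= (eps z + mdist X x z) / 2.
Proof.
  unfold hh. destruct (mval_lub x) as [H _].
  assert (- (eps z + mdist X x z) <= mval x) by (apply H; exists z; reflexivity). lra.
Qed.

Lemma mval_lip x y : mval y <= mval x + mdist X x y.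
Proof.
  destruct (mval_lub y) as [_ H]. apply H. intros v [z ->].
  destruct (mval_lub x) as [H1 _].
  assert (- (eps z + mdist X x z) <= mval x) by (apply H1; exists z; reflexivity).
  pose proof (Defs.dist_tri X x y z). lra.
Qed.

End H.

Lemma hh_Cplus (X : MetricSpace) eps (Hp : forall x, 0 < eps x) (He : Cplus X eps) :
  Cplus X (hh X eps Hp).
Proof.
  destruct He as [_ Hc]. split.
  - intros x. destruct (Hc x (eps x / 2)) as [rho [Hr Hrho]].
    { pose proof (Hp x); lra. }
    set (c := Rmin (eps x / 2) rho).
    assert (Hc0 : 0 < c). { unfold c. apply Rmin_glb_lt; try lra. pose proof (Hp x); lra. }
    assert (mval X eps Hp x <= - c).
    { destruct (mval_lub X eps Hp x) as [_ H]. apply H. intros v [z ->].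
      pose proof (Hp z). pose proof (dist_nonneg X x z).
      destruct (Rlt_or_le (mdist X x z) rho) as [Hl|Hl].
      - specialize (Hrho z Hl). apply Rabs_def2 in Hrho. destruct Hrho.
        assert (c <= eps x / 2) by apply Rmin_l. lra.
      - assert (c <= rho) by apply Rmin_r. lra. }
    unfold hh.  lra.
  - intros x e He. exists e. split; [exact He|]. intros y Hy.
    pose proof (mval_lip X eps Hp x y). pose proof (mval_lip X eps Hp y x).
    rewrite Defs.dist_sym in H0. unfold hh.  apply Rabs_def1; pose proof (dist_nonneg X x y); lra.
Qed.

Theorem mainTheorem3 (X : MetricSpace) (f g : X -> X) :
  locally_compact X ->
  homeomorphism X f g ->
  topological_shadowing X f g ->
  forall eps : X -> R, Cplus X eps ->
    exists delta : X -> R, Cplus X delta /\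
      forall xs : Z -> X, pseudo_orbit X f delta xs ->
        exists y : X, forall n : Z,
          mdist X (xs n) (iterz X f g n y) < eps (iterz X f g n y).
Proof.
  intros _ _ Hsh eps He.
  destruct (Hsh _ (hh_Cplus X eps (proj1 He) He)) as [delta [Hd Hpo]].
  exists delta. split; [exact Hd|].
  intros xs Hxs. destruct (Hpo xs Hxs) as [y Hy]. exists y. intros n.
  specialize (Hy n). pose proof (hh_le X eps (proj1 He) (xs n) (iterz X f g n y)).
  rewrite Defs.dist_sym in Hy. lra.
Qed.
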